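(* Let $T(n)=(3n+1)/2^{v_2(3n+1)}$ be the Syracuse map. For odd $n$ let $L(n)=v_2(n+1)-1$. Fix $\ell\ge 0$. Among the odd positive integers $n$ with $L(n)=\ell$, the natural density (relative to that set) of those with $T^{\ell+1}(n)<n$ equals $$p_\ell=2^{-\lfloor(\log_2 3-1)(\ell+1)\rfloor}.$$
   Context: $v_2$ is the $2$-adic valuation; $T^j$ the $j$-th iterate. *)

(* Defs.v *)
From Stdlib Require Import Reals Arith List.
Open Scope R_scope.

(* 2-adic valuation of a natural number (convention: v2 0 = 0). *)
Fixpoint v2_aux (fuel m : nat) : nat :=
  match fuel with
  | O => O
  | S f => if Nat.eqb m 0 then O
           else if Nat.even m then S (v2_aux f (Nat.div m 2)) else O
  end.
Definition v2 (m : nat) : nat := v2_aux m m.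

Definition syr (n : nat) : nat :=
  Nat.div (3 * n + 1) (2 ^ v2 (3 * n + 1)).

Definition Lval (n : nat) : Z := (Z.of_nat (v2 (n + 1)) - 1)%Z.

Definition count_upto (P : nat -> bool) (N : nat) : nat :=
  length (filter P (seq 1 N)).

Definition rel_density (A B : nat -> bool) (d : R) : Prop :=
  Un_cv (fun N => INR (count_upto (fun n => andb (B n) (A n)) N)
                  / INR (count_upto B N)) d.

Definition log2 (x : R) : R := ln x / ln 2.

(* Main.v *)
Require Import Defs.
From Stdlib Require Import Reals Arith ZArith List Lia Lra.

Open Scope R_scope.
Open Scope nat_scope.

Lemma pow2_pos e : 1 <= 2 ^ e.
Proof. induction e; simpl; lia. Qed.

Lemma v2_aux_S f m : v2_aux (S f) m =
  if Nat.eqb m 0 then O else if Nat.even m then S (v2_aux f (Nat.div m 2)) else O.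
Proof. reflexivity. Qed.

Lemma v2_aux_char : forall f e o, 2^e*(2*o+1) <= f -> v2_aux f (2^e*(2*o+1)) = e.
Proof.
  induction f as [|f IH]; intros e o H.
  - pose proof (pow2_pos e). nia.
  - pose proof (pow2_pos e). rewrite v2_aux_S.
    replace (Nat.eqb (2 ^ e * (2 * o + 1)) 0) with false by (symmetry; apply Nat.eqb_neq; nia).
    destruct e as [|e].
    + replace (2^0*(2*o+1)) with (1 + 2*o) by (simpl; lia).
      rewrite Nat.even_add_mul_2. reflexivity.
    + replace (2 ^ S e * (2 * o + 1)) with ((2^e*(2*o+1)) * 2) by (rewrite Nat.pow_succ_r'; ring).
      rewrite Nat.even_mul. rewrite Bool.orb_true_r.
      rewrite Nat.div_mul by lia. f_equal. apply IH.
      pose proof (pow2_pos e). rewrite Nat.pow_succ_r' in H. nia.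
Qed.

Lemma v2_char e o : v2 (2^e*(2*o+1)) = e.
Proof. unfold v2. apply v2_aux_char. lia. Qed.

Lemma decomp : forall x, 0 < x -> exists e o, x = 2^e*(2*o+1).
Proof.
  intro x. induction x as [x IH] using lt_wf_ind. intro Hx.
  destruct (Nat.Even_or_Odd x) as [[y Hy]|[y Hy]].
  - destruct (IH y ltac:(lia) ltac:(lia)) as [e [o Heo]].
    exists (S e), o. rewrite Nat.pow_succ_r'. lia.
  - exists 0, y. simpl. lia.
Qed.

Lemma syr_step j c : 1 <= c ->
  syr (2^(S (S j)) * c - 1) = 2^(S j) * (3 * c) - 1.
Proof.
  intro Hc. unfold syr. pose proof (pow2_pos j) as Hw.
  rewrite !Nat.pow_succ_r'.
  set (w := 2^j) in *.
  replace (3 * (2 * (2 * w) * c - 1) + 1) with (2^1*(2*(3*w*c-1)+1)) by (simpl; nia).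
  rewrite v2_char. rewrite Nat.mul_comm, Nat.div_mul by (simpl; lia). nia.
Qed.

Lemma syr_last c k o : 1 <= c -> 3 * c - 1 = 2^k*(2*o+1) -> syr (2*c - 1) = 2*o+1.
Proof.
  intros Hc H. unfold syr.
  replace (3 * (2 * c - 1) + 1) with (2^(S k)*(2*o+1)) by (rewrite Nat.pow_succ_r'; nia).
  rewrite v2_char. rewrite Nat.mul_comm, Nat.div_mul. reflexivity.
  pose proof (pow2_pos (S k)). lia.
Qed.

Lemma iter_mid : forall j c, 1 <= c ->
  Nat.iter j syr (2^(S j) * c - 1) = 2 * 3^j * c - 1.
Proof.
  induction j as [|j IH]; intros c Hc.
  - simpl. lia.
  - rewrite Nat.iter_succ_r. rewrite syr_step by lia. rewrite IH by lia.
    rewrite Nat.pow_succ_r'. lia.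
Qed.

Lemma iter_full l m k o : 1 <= m -> 3^(S l) * m - 1 = 2^k*(2*o+1) ->
  Nat.iter (S l) syr (2^(S l) * m - 1) = 2*o+1.
Proof.
  intros Hm H. rewrite Nat.iter_succ. rewrite iter_mid by lia.
  pose proof (Nat.pow_nonzero 3 l).
  replace (2 * 3 ^ l * m) with (2 * (3^l*m)) by lia.
  apply (syr_last _ k). nia. rewrite Nat.pow_succ_r' in H. rewrite <- H. lia.
Qed.

Open Scope nat_scope.

Lemma mod_iff M c n : c < M -> (n mod M = c <-> exists j, n = M*j + c).
Proof.
  intro H. split.
  - intro E. exists (n / M). rewrite <- E. apply Nat.div_mod_eq.
  - intros [j Hj]. symmetry. apply (Nat.mod_unique _ _ j); lia.
Qed.

Lemma B_iff l n : (Nat.odd n && Z.eqb (Lval n) (Z.of_nat l))%bool = true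
  <-> exists t, n + 1 = 2^(S l)*(2*t+1).
Proof.
  split.
  - intro H. apply andb_prop in H as [_ H]. apply Z.eqb_eq in H. unfold Lval in H.
    destruct (decomp (n+1) ltac:(lia)) as [e [o Heo]].
    rewrite Heo, v2_char in H. exists o. rewrite Heo. f_equal. f_equal. lia.
  - intros [t Ht]. apply andb_true_intro. split.
    + apply Nat.odd_spec. exists (2^l*(2*t+1) - 1). rewrite Nat.pow_succ_r' in Ht.
      pose proof (pow2_pos l). nia.
    + apply Z.eqb_eq. unfold Lval. rewrite Ht, v2_char. lia.
Qed.

Lemma B_mod l n : (Nat.odd n && Z.eqb (Lval n) (Z.of_nat l))%bool = true
  <-> n mod 2^(S (S l)) = 2^(S l) - 1.
Proof.
  rewrite B_iff. pose proof (pow2_pos (S l)). rewrite mod_iff.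
  2:{ rewrite (Nat.pow_succ_r' 2 (S l)). lia. }
  rewrite (Nat.pow_succ_r' 2 (S l)).
  split; intros [j Hj]; exists j; nia.
Qed.

Lemma odd3 a : exists t, 3^a = 2*t+1.
Proof.
  induction a as [|a [t IH]].
  - exists 0. reflexivity.
  - exists (3*t+1). rewrite Nat.pow_succ_r', IH. lia.
Qed.

Lemma div_pow2_odd : forall s A d, (exists t, A = 2*t+1) ->
  Nat.divide (2^s) (A*d) -> Nat.divide (2^s) d.
Proof.
  induction s as [|s IH]; intros A d HA H.
  - apply Nat.divide_1_l.
  - destruct HA as [t Ht].
    assert (Hd : exists d', d = 2*d').
    { destruct (Nat.Even_or_Odd d) as [[d' E]|[d' E]]; [exists d'; exact E|].
      exfalso. destruct H as [z Hz]. rewrite Nat.pow_succ_r' in Hz. subst. nia. }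
    destruct Hd as [d' Hd']. subst d.
    assert (Nat.divide (2^s) (A*d')).
    { destruct H as [z Hz]. exists z. rewrite Nat.pow_succ_r' in Hz. nia. }
    destruct (IH A d' (ex_intro _ t Ht) H0) as [z Hz]. exists z.
    rewrite Nat.pow_succ_r'. lia.
Qed.

Lemma m0_exists a s : 1 <= s -> exists u, 2*u+1 < 2^s /\ Nat.divide (2^s) (3^a*(2*u+1) - 1).
Proof.
  intro Hs. induction s as [|s IH]; [lia|].
  destruct (odd3 a) as [t Ht].
  destruct s as [|s].
  - exists 0. simpl. split; [lia|]. exists t. rewrite Ht. lia.
  - destruct (IH ltac:(lia)) as [u [Hu [w Hw]]].
    destruct (Nat.Even_or_Odd w) as [[w' E]|[w' E]].
    + exists u. split. rewrite (Nat.pow_succ_r' 2 (S s)). lia.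
      exists w'. rewrite (Nat.pow_succ_r' 2 (S s)). lia.
    + exists (u + 2^s). rewrite !Nat.pow_succ_r' in *. split; [lia|].
      exists (w' + t + 1). rewrite Ht in *. nia.
Qed.

Lemma res_iff A s u m : (exists t, A = 2*t+1) -> 1 <= m -> 2*u+1 < 2^s ->
  Nat.divide (2^s) (A*(2*u+1) - 1) ->
  (Nat.divide (2^s) (A*m - 1) <-> exists j, m = 2^s*j + (2*u+1)).
Proof.
  intros HA Hm Hu H0. assert (1 <= A) by (destruct HA; lia).
  split.
  - intro H1.
    destruct (Nat.le_gt_cases (2*u+1) m) as [Hle|Hlt].
    + assert (Nat.divide (2^s) (A*(m - (2*u+1)))).
      { rewrite Nat.mul_sub_distr_l.
        replace (A*m - A*(2*u+1)) with ((A*m - 1) - (A*(2*u+1) - 1)) by nia.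
        apply Nat.divide_sub_r; assumption. }
      apply div_pow2_odd in H2; auto. destruct H2 as [j Hj]. exists j. lia.
    + exfalso.
      assert (Nat.divide (2^s) (A*((2*u+1) - m))).
      { rewrite Nat.mul_sub_distr_l.
        replace (A*(2*u+1) - A*m) with ((A*(2*u+1) - 1) - (A*m - 1)) by nia.
        apply Nat.divide_sub_r; assumption. }
      apply div_pow2_odd in H2; auto. apply Nat.divide_pos_le in H2; lia.
  - intros [j Hj]. subst m. destruct H0 as [z Hz]. exists (A*j + z).
    rewrite Nat.mul_add_distr_l. nia.
Qed.

Lemma divk s k o X : X = 2^k*(2*o+1) -> (Nat.divide (2^s) X <-> s <= k).
Proof.
  intro HX. subst X. split.
  - intro H. destruct (Nat.le_gt_cases s k) as [|Hlt]; auto. exfalso.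
    assert (Nat.divide (2^(S k)) (2^k*(2*o+1))).
    { apply (Nat.divide_trans _ (2^s)); auto. exists (2^(s - S k)).
      rewrite <- Nat.pow_add_r. f_equal. lia. }
    rewrite Nat.pow_succ_r, Nat.mul_comm in H0 by lia.
    apply Nat.mul_divide_cancel_l in H0. 2:{ pose proof (pow2_pos k). lia. }
    destruct H0 as [z Hz]. lia.
  - intro H. exists (2^(k-s)*(2*o+1)). replace k with ((k-s)+s) at 1 by lia.
    rewrite Nat.pow_add_r. ring.
Qed.

Open Scope nat_scope.

Lemma count_0 P : count_upto P 0 = 0.
Proof. reflexivity. Qed.

Lemma count_S P N : count_upto P (S N) = count_upto P N + (if P (S N) then 1 else 0).
Proof.
  unfold count_upto. rewrite seq_S, filter_app, length_app. simpl.
  replace (N + 1) with (S N) by lia. destruct (P (S N)); reflexivity.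
Qed.

Lemma count_ext P Q N : (forall n, P n = Q n) -> count_upto P N = count_upto Q N.
Proof.
  intro H. induction N; [reflexivity|]. rewrite !count_S, IHN, H. reflexivity.
Qed.

Lemma count_mono P Q N : (forall n, P n = true -> Q n = true) -> count_upto P N <= count_upto Q N.
Proof.
  intro H. induction N; [rewrite !count_0; lia|]. rewrite !count_S.
  specialize (H (S N)). destruct (P (S N)), (Q (S N)); try lia; specialize (H eq_refl); discriminate.
Qed.

Lemma count_union3 P Q R T0 N :
  (forall n, P n = true -> Q n = true \/ R n = true \/ T0 n = true) ->
  count_upto P N <= count_upto Q N + count_upto R N + count_upto T0 N.
Proof.
  intro H. induction N; [rewrite !count_0; lia|]. rewrite !count_S.
  specialize (H (S N)). destruct (P (S N)), (Q (S N)), (R (S N)), (T0 (S N)); try lia;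
  destruct (H eq_refl) as [E|[E|E]]; discriminate E.
Qed.

Lemma count_small P L N : (forall n, P n = true -> n < L) -> count_upto P N <= L.
Proof.
  intro H. assert (count_upto P N <= Nat.min N L); [|lia].
  induction N; [rewrite !count_0; lia|]. rewrite count_S.
  specialize (H (S N)). destruct (P (S N)); [specialize (H eq_refl)|]; lia.
Qed.

Lemma count_res_exact M c : 1 <= c < M -> forall k,
  count_upto (fun n => Nat.eqb (n mod M) c) k = k / M + (if c <=? k mod M then 1 else 0).
Proof.
  intros Hc k. induction k as [|k IH].
  - rewrite count_0. rewrite Nat.Div0.div_0_l, Nat.Div0.mod_0_l.
    destruct (Nat.leb_spec c 0); lia.
  - rewrite count_S, IH. pose proof (Nat.div_mod_eq k M) as E.
    pose proof (Nat.mod_upper_bound k M ltac:(lia)) as U.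
    set (d := k / M) in *. set (e := k mod M) in *.
    destruct (Nat.eq_dec (S e) M) as [He|He].
    + assert (H1: S k mod M = 0) by (symmetry; apply (Nat.mod_unique _ _ (S d)); lia).
      assert (H2: S k / M = S d) by (symmetry; apply (Nat.div_unique _ _ (S d) 0); lia).
      rewrite H1, H2. destruct (Nat.leb_spec c e), (Nat.leb_spec c 0), (Nat.eqb_spec 0 c); lia.
    + assert (H1: S k mod M = S e) by (symmetry; apply (Nat.mod_unique _ _ d); lia).
      assert (H2: S k / M = d) by (symmetry; apply (Nat.div_unique _ _ d (S e)); lia).
      rewrite H1, H2. destruct (Nat.leb_spec c e), (Nat.leb_spec c (S e)), (Nat.eqb_spec (S e) c); lia.
Qed.

Lemma count_res M c N : 1 <= c < M ->
  let cnt := count_upto (fun n => Nat.eqb (n mod M) c) N in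
  N <= M*cnt + M /\ M*cnt <= N + M.
Proof.
  intros Hc cnt. unfold cnt. rewrite count_res_exact by lia.
  pose proof (Nat.div_mod_eq N M) as E.
  pose proof (Nat.mod_upper_bound N M ltac:(lia)) as U.
  destruct (c <=? N mod M); nia.
Qed.

Open Scope R_scope.

Lemma exists_nat_gt r : exists n : nat, r < INR n.
Proof.
  destruct (archimed r) as [H1 _].
  exists (Z.to_nat (up r)).
  destruct (Z.le_gt_cases 0 (up r)) as [H|H].
  - rewrite INR_IZR_INZ, Z2Nat.id by exact H. lra.
  - replace (Z.to_nat (up r)) with 0%nat by lia. simpl. apply IZR_lt in H. lra.
Qed.

Lemma limit_core (x y : nat -> R) (p q : R) :
  0 < q ->
  (forall N, INR N / q - 1 <= y N) ->
  (forall N, x N - p * y N <= 2) ->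
  (forall K : nat, exists C, 0 <= C /\ forall N, - C - INR N / (q * 2^K) <= x N - p * y N) ->
  Un_cv (fun N => x N / y N) p.
Proof.
  intros Hq Hy Hu Hl eps Heps.
  destruct (exists_nat_gt (4/eps)) as [K HK].
  assert (HK2 : INR K < 2^K).
  { clear. induction K. simpl. lra. rewrite S_INR. simpl.
    assert (1 <= 2^K) by (apply pow_R1_Rle; lra). lra. }
  set (t := / 2^K).
  assert (Ht0 : 0 < t) by (unfold t; apply Rinv_0_lt_compat; apply pow_lt; lra).
  assert (Ht : t < eps / 4).
  { unfold t. assert (0 < 2^K) by (apply pow_lt; lra).
    assert (4/eps < 2^K) by lra.
    apply (Rmult_lt_reg_r (2^K)); auto. rewrite Rinv_l by lra.
    apply (Rmult_lt_reg_l (4/eps)). unfold Rdiv; apply Rmult_lt_0_compat; [lra| apply Rinv_0_lt_compat; lra].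
    replace (4 / eps * (eps / 4 * 2 ^ K)) with (2^K) by (field; lra). lra. }
  destruct (Hl K) as [C [HC HlK]].
  destruct (exists_nat_gt (2*q + 4*q*(2+C)/eps)) as [N0 HN0].
  exists N0. intros N HN. unfold R_dist.
  apply le_INR in HN.
  set (Nr := INR N) in *.
  assert (HNr1 : 2*q <= Nr).
  { assert (0 <= 4*q*(2+C)/eps). { unfold Rdiv. apply Rmult_le_pos; [nra| left; apply Rinv_0_lt_compat; lra]. } lra. }
  assert (HNr2 : 4*q*(2+C) < eps * Nr).
  { assert (4*q*(2+C)/eps < Nr). { assert (0 <= 2*q) by lra. lra. }
    apply (Rmult_lt_compat_l eps) in H; auto.
    replace (eps * (4 * q * (2 + C) / eps)) with (4*q*(2+C)) in H by (field; lra). lra. }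
  specialize (Hy N). specialize (Hu N). specialize (HlK N). fold Nr in Hy, HlK.
  assert (Hy2 : Nr / (2*q) <= y N).
  { assert (Nr / (2*q) = Nr/q - Nr/(2*q)) by (field; lra).
    assert (1 <= Nr/(2*q)). { apply (Rmult_le_reg_r (2*q)). lra. unfold Rdiv. rewrite Rmult_assoc, Rinv_l by lra. lra. }
    lra. }
  assert (Hypos : 0 < y N).
  { assert (0 < Nr / (2*q)). { unfold Rdiv. apply Rmult_lt_0_compat; [lra| apply Rinv_0_lt_compat; lra]. } lra. }
  replace (Nr / (q * 2^K)) with (Nr * t / q) in HlK by (unfold t; field; split; [apply pow_nonzero; lra| lra]).
  assert (HD : 2 + C + Nr * t / q < eps * y N).
  { assert (E1 : Nr * t / q <= Nr * (eps/4) / q).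
    { unfold Rdiv. apply Rmult_le_compat_r. left; apply Rinv_0_lt_compat; lra.
      apply Rmult_le_compat_l; lra. }
    assert (E2 : eps * (Nr / (2*q)) <= eps * y N) by (apply Rmult_le_compat_l; lra).
    assert (E3 : 2 + C < eps * Nr / (4 * q)).
    { apply (Rmult_lt_reg_r (4*q)). lra. unfold Rdiv.
      replace (eps * Nr * / (4 * q) * (4 * q)) with (eps*Nr) by (field; lra). lra. }
    replace (eps * (Nr / (2*q))) with (eps * Nr / (4*q) + Nr * (eps/4) / q) in E2 by (field; lra).
    lra. }
  replace (x N / y N - p) with ((x N - p * y N) / y N) by (field; lra).
  apply Rabs_def1.
  - apply (Rmult_lt_reg_r (y N)); auto. unfold Rdiv. rewrite Rmult_assoc, Rinv_l by lra.
    assert (0 <= Nr * t / q). { unfold Rdiv. apply Rmult_le_pos; [apply Rmult_le_pos; lra| left; apply Rinv_0_lt_compat; lra]. }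
    lra.
  - apply (Rmult_lt_reg_r (y N)); auto. unfold Rdiv. rewrite Rmult_assoc, Rinv_l by lra.
    lra.
Qed.

Lemma F_spec l : exists F : nat,
  Int_part ((log2 3 - 1) * INR (S l)) = Z.of_nat F /\
  (2^(S l) * 2^F < 3^(S l) < 2^(S l) * 2^(S F))%nat.
Proof.
  set (a := S l).
  assert (Hln2 : 0 < ln 2) by (pose proof ln_lt_2; lra).
  assert (Hln3 : ln 2 < ln 3) by (apply ln_increasing; lra).
  set (x := (log2 3 - 1) * INR a).
  assert (Hx : x * ln 2 = INR a * (ln 3 - ln 2)).
  { unfold x, log2. field. lra. }
  assert (Hx0 : 0 <= x).
  { unfold x, log2. apply Rmult_le_pos; [|apply pos_INR].
    assert (1 <= ln 3 / ln 2); [|lra].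
    apply (Rmult_le_reg_r (ln 2)); auto. unfold Rdiv. rewrite Rmult_assoc, Rinv_l by lra. lra. }
  destruct (base_Int_part x) as [B1 B2].
  set (z := Int_part x) in *.
  assert (Hz : (0 <= z)%Z). { assert (-1 < IZR z) by lra. apply lt_IZR in H. lia. }
  exists (Z.to_nat z). split. { rewrite Z2Nat.id; auto. }
  set (F := Z.to_nat z).
  assert (HF : IZR z = INR F) by (unfold F; rewrite INR_IZR_INZ, Z2Nat.id; auto).
  rewrite HF in B1, B2.
  assert (P2a : 0 < 2^a) by (apply pow_lt; lra).
  assert (P2F : 0 < 2^F) by (apply pow_lt; lra).
  assert (P3a : 0 < 3^a) by (apply pow_lt; lra).
  assert (L1 : ln (2^a * 2^F) = (INR a + INR F) * ln 2).
  { rewrite ln_mult, !ln_pow by lra. ring. }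
  assert (L2 : ln (2^a * 2^(S F)) = (INR a + INR F + 1) * ln 2).
  { assert (0 < 2^(S F)) by (apply pow_lt; lra).
    rewrite ln_mult, !ln_pow by lra. rewrite S_INR. ring. }
  assert (L3 : ln (3^a) = INR a * ln 3) by (rewrite ln_pow; lra).
  assert (R1 : 2^a * 2^F <= 3^a).
  { destruct (Rle_or_lt (2^a*2^F) (3^a)) as [|H]; auto.
    apply ln_increasing in H; [|lra]. rewrite L1, L3 in H.
    assert (INR F * ln 2 <= x * ln 2) by (apply Rmult_le_compat_r; lra). nra. }
  assert (R2 : 3^a < 2^a * 2^(S F)).
  { apply ln_lt_inv; [lra| apply Rmult_lt_0_compat; [lra| apply pow_lt; lra]|].
    rewrite L2, L3.
    assert (x * ln 2 < (INR F + 1) * ln 2) by (apply Rmult_lt_compat_r; lra). nra. }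
  assert (E2 : INR 2 = 2) by (simpl; ring).
  assert (E3 : INR 3 = 3) by (simpl; ring).
  split.
  - assert (Hle : (2^a * 2^F <= 3^a)%nat).
    { apply INR_le. rewrite mult_INR, !pow_INR, E2, E3. exact R1. }
    destruct (odd3 a) as [t Ht].
    assert (2^a * 2^F <> 3^a)%nat.
    { rewrite Ht. unfold a. rewrite Nat.pow_succ_r'. lia. }
    lia.
  - apply INR_lt. rewrite mult_INR, !pow_INR, E2, E3. exact R2.
Qed.

Open Scope nat_scope.

Lemma ineq_i Bn A P O m : 1 <= m -> 1 <= P -> Bn*P < A -> P*O = A*m - 1 -> Bn*m - 1 <= O.
Proof.
  intros Hm HP H1 H2.
  destruct (Nat.le_gt_cases (Bn*m - 1) O) as [|Hlt]; auto. exfalso.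
  assert (O + 2 <= Bn*m) by lia.
  assert (P*(O+2) <= P*(Bn*m)) by (apply Nat.mul_le_mono_l; auto).
  assert ((Bn*P+1)*m <= A*m) by (apply Nat.mul_le_mono_r; lia).
  nia.
Qed.

Lemma ineq_ii Bn A P O m : 1 <= A -> 1 <= m -> 1 <= P -> A < Bn*P -> P <= m -> P*O = A*m - 1 -> O < Bn*m - 1.
Proof.
  intros HA Hm HP H1 H2 H3.
  assert (1 <= A*m) by nia.
  assert ((A+1)*m <= (Bn*P)*m) by (apply Nat.mul_le_mono_r; lia).
  assert (P*O + P + 1 <= P*(Bn*m)) by nia.
  assert (P*O < P*(Bn*m - 1)) by (rewrite Nat.mul_sub_distr_l; lia).
  apply Nat.mul_lt_mono_pos_l in H5; lia.
Qed.

Section Main.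
Variable l : nat.
Let a := S l.
Let A := 3^a.
Definition Bp (n : nat) := (Nat.odd n && Z.eqb (Lval n) (Z.of_nat l))%bool.
Definition Gres (s u n : nat) := Nat.eqb (n mod (2^a*2^s)) (2^a*(2*u+1) - 1).

Lemma A_odd : exists t, A = 2*t+1.
Proof. apply odd3. Qed.

Lemma Gres_iff s u n : 1 <= s -> 2*u+1 < 2^s -> Nat.divide (2^s) (A*(2*u+1) - 1) ->
  (Gres s u n = true <-> exists t, n + 1 = 2^a*(2*t+1) /\ Nat.divide (2^s) (A*(2*t+1) - 1)).
Proof.
  intros Hs Hu Hd. unfold Gres. rewrite Nat.eqb_eq.
  pose proof (pow2_pos a) as Ha. pose proof (pow2_pos s) as Hs'.
  rewrite mod_iff by nia.
  split.
  - intros [j Hj]. destruct s as [|s]; [lia|].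
    exists (2^s*j + u). split.
    + rewrite Nat.pow_succ_r' in Hj. nia.
    + apply (res_iff A (S s) u); auto. apply A_odd. lia.
      exists j. rewrite Nat.pow_succ_r'. lia.
  - intros [t [Ht Hd2]]. apply (res_iff A s u) in Hd2; auto; [|apply A_odd|lia].
    destruct Hd2 as [j Hj]. exists j. nia.
Qed.

End Main.

Lemma div_lo (q N c : R) : (0 < q)%R -> (N <= q*c + q)%R -> (N/q - 1 <= c)%R.
Proof. intros Hq H. apply (Rmult_le_reg_r q); auto. unfold Rdiv.
  replace ((N * / q - 1) * q)%R with (N - q)%R by (field; lra). lra. Qed.

Lemma div_hi (q N c : R) : (0 < q)%R -> (q*c <= N + q)%R -> (c <= N/q + 1)%R.
Proof. intros Hq H. apply (Rmult_le_reg_r q); auto. unfold Rdiv.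
  replace ((N * / q + 1) * q)%R with (N + q)%R by (field; lra). lra. Qed.

Lemma three_pos l : 1 <= 3^(S l)*1 - 0.
Proof. rewrite Nat.pow_succ_r'. pose proof (Nat.pow_nonzero 3 l). lia. Qed.

Lemma count_res_R M c N : 1 <= c < M ->
  (INR N <= INR M * INR (count_upto (fun n => Nat.eqb (n mod M) c) N) + INR M /\
   INR M * INR (count_upto (fun n => Nat.eqb (n mod M) c) N) <= INR N + INR M)%R.
Proof.
  intro H. destruct (count_res M c N H) as [L U].
  apply le_INR in L, U. rewrite plus_INR, mult_INR in L, U. lra.
Qed.

Close Scope nat_scope.
Open Scope R_scope.

Theorem mainTheorem12 (l : nat) :
  rel_density
    (fun n => Nat.ltb (Nat.iter (S l) syr n) n)
    (fun n => andb (Nat.odd n) (Z.eqb (Lval n) (Z.of_nat l)))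
    (powerRZ 2 (- Int_part ((log2 3 - 1) * INR (S l)))).
Proof.
  Open Scope nat_scope.
  destruct (F_spec l) as [F [HF [HF1 HF2]]]. rewrite HF.
  replace (powerRZ 2 (- Z.of_nat F)) with (/ 2^F)%R
    by (rewrite powerRZ_neg', <- pow_powerRZ; reflexivity).
  destruct (m0_exists (S l) (S F) ltac:(lia)) as [u0 [Hu0 Hd0]].
  assert (HA3 : 3 <= 3^(S l)) by (rewrite Nat.pow_succ_r'; pose proof (Nat.pow_nonzero 3 l); lia).
  set (Pp := fun n => ((Nat.odd n && Z.eqb (Lval n) (Z.of_nat l)) && (Nat.iter (S l) syr n <? n))%bool).
  assert (f2 : forall n, Pp n = true -> Gres l (S F) u0 n = true).
  { intros n H. unfold Pp in H. apply andb_prop in H as [HB Hlt]. apply Nat.ltb_lt in Hlt.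
    apply B_iff in HB as [t Ht].
    destruct (decomp (3^(S l)*(2*t+1) - 1) ltac:(nia)) as [k [o Hko]].
    assert (En : n = 2^(S l)*(2*t+1) - 1) by lia.
    rewrite En in Hlt at 1. rewrite (iter_full l (2*t+1) k o) in Hlt by (auto; lia).
    apply Gres_iff; auto; [lia|]. exists t. split; auto.
    apply (divk _ k o _ Hko).
    destruct (Nat.le_gt_cases (S F) k) as [|Hk]; auto. exfalso.
    assert (2^k <= 2^F) by (apply Nat.pow_le_mono_r; lia).
    assert (2^(S l) * 2^k <= 2^(S l)*2^F) by (apply Nat.mul_le_mono_l; auto).
    pose proof (ineq_i (2^(S l)) (3^(S l)) (2^k) (2*o+1) (2*t+1) ltac:(lia) (pow2_pos k) ltac:(lia)
       ltac:(rewrite <- Hko; reflexivity)).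
    lia. }
  assert (f3 : forall K uK, 2*uK+1 < 2^(S K) -> Nat.divide (2^(S K)) (3^(S l)*(2*uK+1) - 1) ->
     forall n, Gres l (S F) u0 n = true ->
       Pp n = true \/ Gres l (S K) uK n = true \/ (n <? 2^(S l)*2^K) = true).
  { intros K uK HuK HdK n H. pose proof H as H'.
    apply Gres_iff in H' as [t [Ht Hdv]]; auto; [|lia].
    destruct (decomp (3^(S l)*(2*t+1) - 1) ltac:(nia)) as [k [o Hko]].
    apply (divk _ k o _ Hko) in Hdv.
    assert (En : n = 2^(S l)*(2*t+1) - 1) by lia.
    destruct (Nat.le_gt_cases (2^k) (2*t+1)) as [Hkm|Hkm].
    - left. unfold Pp. apply andb_true_intro. split.
      + apply B_iff. exists t. exact Ht.
      + apply Nat.ltb_lt. rewrite En. rewrite (iter_full l (2*t+1) k o) by (auto; lia).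
        assert (2^(S F) <= 2^k) by (apply Nat.pow_le_mono_r; lia).
        assert (2^(S l) * 2^(S F) <= 2^(S l)*2^k) by (apply Nat.mul_le_mono_l; auto).
        pose proof (pow2_pos k).
        apply (ineq_ii (2^(S l)) (3^(S l)) (2^k)); try lia.
    - destruct (Nat.lt_ge_cases (2*t+1) (2^K)) as [HK|HK].
      + right; right. apply Nat.ltb_lt. rewrite En.
        assert (2^(S l)*(2*t+1) < 2^(S l)*2^K) by (apply Nat.mul_lt_mono_pos_l; auto; apply pow2_pos).
        lia.
      + right; left. apply Gres_iff; auto; [lia|]. exists t. split; auto.
        apply (divk _ k o _ Hko).
        assert (2^K < 2^k) by lia. apply Nat.pow_lt_mono_r_iff in H0; lia. }
  unfold rel_density.
  set (Bb := fun n => (Nat.odd n && Z.eqb (Lval n) (Z.of_nat l))%bool).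
  change (Un_cv (fun N => INR (count_upto Pp N) / INR (count_upto Bb N)) (/ 2^F))%R.
  set (Ma := INR (2^(S l))).
  assert (HMa : (0 < Ma)%R) by (apply lt_0_INR; pose proof (pow2_pos (S l)); lia).
  assert (E2 : INR 2 = 2%R) by (simpl; ring).
  set (Q := (Ma * 2)%R).
  assert (HQ : (0 < Q)%R) by (unfold Q; lra).
  assert (P2F : (1 <= 2^F)%R) by (apply pow_R1_Rle; lra).
  assert (IF1 : (0 < / 2^F <= 1)%R).
  { split. apply Rinv_0_lt_compat; lra. rewrite <- Rinv_1. apply Rinv_le_contravar; lra. }
  assert (HBcount : forall N, (INR N / Q - 1 <= INR (count_upto Bb N) <= INR N / Q + 1)%R).
  { intro N.
    rewrite (count_ext Bb (fun n => Nat.eqb (n mod (2^(S l)*2)) (2^(S l) - 1))).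
    2:{ intro n. unfold Bb. apply Bool.eq_iff_eq_true. rewrite B_mod, Nat.eqb_eq.
        replace (2^(S (S l))) with (2^(S l)*2) by (rewrite (Nat.pow_succ_r' 2 (S l)); lia). tauto. }
    destruct (count_res_R (2^(S l)*2) (2^(S l)-1) N) as [L U].
    { pose proof (pow2_pos l). rewrite Nat.pow_succ_r'. lia. }
    rewrite mult_INR, E2 in L, U. fold Ma Q in L, U.
    split; [apply div_lo|apply div_hi]; auto. }
  assert (HGcount : forall K u, 2*u+1 < 2^(S K) -> forall N,
     (INR N / (Q * 2^K) - 1 <= INR (count_upto (Gres l (S K) u) N) <= INR N / (Q * 2^K) + 1)%R).
  { intros K u Hu N. unfold Gres.
    destruct (count_res_R (2^(S l)*2^(S K)) (2^(S l)*(2*u+1) - 1) N) as [L U].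
    { pose proof (pow2_pos l). pose proof (pow2_pos (S K)). rewrite Nat.pow_succ_r'. nia. }
    rewrite mult_INR, (pow_INR 2 (S K)), E2 in L, U. fold Ma in L, U.
    replace (Ma * 2 ^ S K)%R with (Q * 2^K)%R in L, U by (unfold Q; simpl; ring).
    assert (0 < Q * 2^K)%R by (apply Rmult_lt_0_compat; auto; apply pow_lt; lra).
    split; [apply div_lo|apply div_hi]; auto. }
  assert (HNM : forall N, (INR N / (Q * 2^F) = / 2^F * (INR N / Q))%R).
  { intro N. field. split; lra. }
  apply (limit_core _ _ _ Q HQ).
  - intro N. apply HBcount.
  - intro N. destruct (HBcount N) as [By1 By2]. destruct (HGcount F u0 Hu0 N) as [G1 G2].
    assert (Hx : (INR (count_upto Pp N) <= INR (count_upto (Gres l (S F) u0) N))%R)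
      by (apply le_INR, count_mono, f2).
    assert (/ 2^F * (INR N / Q - 1) <= / 2^F * INR (count_upto Bb N))%R
      by (apply Rmult_le_compat_l; lra).
    rewrite HNM in G2. nra.
  - intro K. destruct (m0_exists (S l) (S K) ltac:(lia)) as [uK [HuK HdK]].
    exists (3 + INR (2^(S l)*2^K))%R. split. { pose proof (pos_INR (2^(S l)*2^K)). lra. }
    intro N. destruct (HBcount N) as [By1 By2]. destruct (HGcount F u0 Hu0 N) as [G1 G2].
    destruct (HGcount K uK HuK N) as [H1 H2].
    assert (Hu : count_upto (Gres l (S F) u0) N <= count_upto Pp N + count_upto (Gres l (S K) uK) N
                  + count_upto (fun n => n <? 2^(S l)*2^K) N)
      by (apply count_union3; apply f3; auto).
    assert (Hs : count_upto (fun n => n <? 2^(S l)*2^K) N <= 2^(S l)*2^K)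
      by (apply count_small; intros n Hn; apply Nat.ltb_lt; auto).
    apply le_INR in Hu, Hs. rewrite !plus_INR in Hu.
    assert (/ 2^F * INR (count_upto Bb N) <= / 2^F * (INR N / Q + 1))%R
      by (apply Rmult_le_compat_l; lra).
    rewrite HNM in G1. nra.
Qed.
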